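(* Let $G$ be the $m\times n$ grid with $m,n\ge 2$ and a cost function $c:V\to\mathbb{Q}_{\ge 0}$. (i) For every zigzag sequence $q_1,\dots,q_{2k}$ and every sequence $t_1,\dots,t_{2k}$ corresponding to it, the set $\{t_1,\dots,t_{2k}\}$ is a landmark set of $G$. (ii) Let $L$ be a landmark set of $G$ with $|L|\ge 4$ that is both minimal (with respect to inclusion) and of minimum cost. Then, after possibly renumbering the rows and columns of the grid by one of its eight symmetries (with the costs carried along), the vertices of $L$ can be ordered as $t_1,\dots,t_{2k}$ forming a perfect sequence for some zigzag sequence.
   Context: The $m\times n$ grid $G$ has vertex set $V=\{(i,j):1\le i\le m,\ 1\le j\le n\}$, with $(i_1,j_1),(i_2,j_2)$ adjacent iff $|i_1-i_2|+|j_1-j_2|=1$; thus $d((i_1,j_1),(i_2,j_2))=|i_1-i_2|+|j_1-j_2|$. The first coordinate is the row (row $1$ on top, row $m$ at the bottom) and the second is the column. A vertex $x$ separates $u,v$ if $d(x,u)\neq d(x,v)$. A landmark set is $L\subseteq V$ such that every pair of distinct vertices is separated by some vertex of $L$; it is minimal if no proper subset is a landmark set, and of minimum cost if $c(L)=\sum_{a\in L}c(a)$ is smallest among all landmark sets. The eight symmetries of the grid correspond to choosing which corner is numbered $(1,1)$ and which of its two neighbours is numbered $(1,2)$ (this may exchange the roles of $m$ and $n$). A zigzag sequence is a sequence $q_1,\dots,q_{2k}$ of vertices, $k\ge 2$, $q_i=(s_i,d_i)$, with $s_1=1$, $s_{2k}=m$; for even $i$: $d_i=d_{i-1}$ and $s_i>s_{i-1}$;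 for odd $i\ge 3$: $s_i=s_{i-1}$ and $d_i>d_{i-1}$. A sequence $t_1,\dots,t_{2k}$, $t_i=(b_i,c_i)$, corresponds to this zigzag sequence if $t_1=q_1$; for even $i$: $b_i=s_i$ and $c_i\le d_i$; for odd $i\ge 3$: $c_i=d_i$ and $b_i\le s_i$; and moreover $c_{2k}>c_1$. A corresponding sequence is perfect if its total cost $\sum_i c(t_i)$ is minimum among all sequences corresponding to the same zigzag sequence. *)

(* Defs.v *)
From HB Require Import structures.
From mathcomp Require Import all_boot all_order all_algebra.
Set Implicit Arguments. Unset Strict Implicit. Unset Printing Implicit Defensive.
Import Order.TTheory GRing.Theory Num.Theory.

(* Vertices of the m x n grid: pairs (row, column), 1-based. *)
Definition vertex := (nat * nat)%type.

Definition inV (m n : nat) (v : vertex) : bool :=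
  (1 <= v.1 <= m) && (1 <= v.2 <= n).

Definition adiff (a b : nat) : nat := (a - b) + (b - a).

Definition gdist (u v : vertex) : nat := adiff u.1 v.1 + adiff u.2 v.2.

Definition separates (x u v : vertex) : bool := gdist x u != gdist x v.

(* A landmark set (finite set represented by a sequence; duplicates irrelevant). *)
Definition landmark (m n : nat) (L : seq vertex) : Prop :=
  all (inV m n) L /\
  forall u v, inV m n u -> inV m n v -> u <> v ->
    exists2 x, x \in L & separates x u v.

Definition minimal_landmark (m n : nat) (L : seq vertex) : Prop :=
  landmark m n L /\
  forall L' : seq vertex, {subset L' <= L} -> ~ {subset L <= L'} ->
    ~ landmark m n L'.

Definition setcost (c : vertex -> rat) (L : seq vertex) : rat :=
  (\sum_(a <- undup L) c a)%R.

Definition min_cost_landmark (m n : nat) (c : vertex -> rat) (L : seq vertex) : Prop :=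
  landmark m n L /\
  forall L', landmark m n L' -> (setcost c L <= setcost c L')%R.

(* Sequences are functions on indices 1..2k. *)
Definition zigzag (m n k : nat) (q : nat -> vertex) : Prop :=
  [/\ 2 <= k,
      (forall i, 1 <= i <= 2 * k -> inV m n (q i)),
      (q 1).1 = 1 /\ (q (2 * k)).1 = m,
      (forall i, 1 <= i <= 2 * k -> ~~ odd i ->
         (q i).2 = (q i.-1).2 /\ (q i.-1).1 < (q i).1) &
      (forall i, 3 <= i <= 2 * k -> odd i ->
         (q i).1 = (q i.-1).1 /\ (q i.-1).2 < (q i).2)].

Definition corresponds (m n k : nat) (q t : nat -> vertex) : Prop :=
  [/\ (forall i, 1 <= i <= 2 * k -> inV m n (t i)),
      t 1 = q 1,
      (forall i, 1 <= i <= 2 * k -> ~~ odd i ->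
         (t i).1 = (q i).1 /\ (t i).2 <= (q i).2),
      (forall i, 3 <= i <= 2 * k -> odd i ->
         (t i).2 = (q i).2 /\ (t i).1 <= (q i).1) &
      (t 1).2 < (t (2 * k)).2].

Definition seqcost (c : vertex -> rat) (k : nat) (t : nat -> vertex) : rat :=
  (\sum_(1 <= i < (2 * k).+1) c (t i))%R.

Definition perfect (m n : nat) (c : vertex -> rat) (k : nat) (q t : nat -> vertex) : Prop :=
  corresponds m n k q t /\
  forall t', corresponds m n k q t' -> (seqcost c k t <= seqcost c k t')%R.

Definition tseq (k : nat) (t : nat -> vertex) : seq vertex :=
  [seq t i | i <- iota 1 (2 * k)].

(* The eight symmetries of the grid: s = (flip rows, flip columns, transpose).
   symv m n s maps the m x n grid onto the (symdims m n s) grid. *)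
Definition symdims (m n : nat) (s : bool * bool * bool) : nat * nat :=
  if s.2 then (n, m) else (m, n).

Definition symv (m n : nat) (s : bool * bool * bool) (v : vertex) : vertex :=
  let i := if s.1.1 then m.+1 - v.1 else v.1 in
  let j := if s.1.2 then n.+1 - v.2 else v.2 in
  if s.2 then (j, i) else (i, j).

Definition syminv (m n : nat) (s : bool * bool * bool) (w : vertex) : vertex :=
  let ij := if s.2 then (w.2, w.1) else w in
  ((if s.1.1 then m.+1 - ij.1 else ij.1), (if s.1.2 then n.+1 - ij.2 else ij.2)).

(* Main.v *)
Require Import Defs.
From HB Require Import structures.
From mathcomp Require Import all_boot all_order all_algebra.
From mathcomp Require Import zify.
Import Order.TTheory GRing.Theory Num.Theory.
Set Implicit Arguments. Unset Strict Implicit. Unset Printing Implicit Defensive.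

Definition mainC (L : seq vertex) i j :=
  has (fun x : vertex => ((x.1 <= i) && (x.2 <= j)) || ((i < x.1) && (j < x.2))) L.
Definition antiC (L : seq vertex) i j :=
  has (fun x : vertex => ((x.1 <= i) && (j < x.2)) || ((i < x.1) && (x.2 <= j))) L.
Definition covers m n L := forall i j, 0 < i < m -> 0 < j < n -> mainC L i j /\ antiC L i j.
Definition rowcond m (L : seq vertex) := forall r, 1 < r < m -> has (fun x : vertex => x.1 != r) L.
Definition colcond n (L : seq vertex) := forall c, 1 < c < n -> has (fun x : vertex => x.2 != c) L.

Lemma covM m n L i j : covers m n L -> 0 < i < m -> 0 < j < n -> mainC L i j.
Proof. by move=> H hi hj; case: (H i j hi hj). Qed.
Lemma covA m n L i j : covers m n L -> 0 < i < m -> 0 < j < n -> antiC L i j.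
Proof. by move=> H hi hj; case: (H i j hi hj). Qed.

Lemma landmark_covers m n L : landmark m n L -> covers m n L.
Proof.
case=> _ H i j hi hj; split.
- have [|||x xL hx] := H (i, j) (i.+1, j.+1).
  + rewrite /inV /=; lia.
  + rewrite /inV /=; lia.
  + case; lia.
  apply/hasP; exists x => //; move: hx; rewrite /separates /gdist /adiff /=; lia.
- have [|||x xL hx] := H (i, j.+1) (i.+1, j).
  + rewrite /inV /=; lia.
  + rewrite /inV /=; lia.
  + case; lia.
  apply/hasP; exists x => //; move: hx; rewrite /separates /gdist /adiff /=; lia.
Qed.

Lemma landmark_col m n L c : landmark m n L -> 1 < c < n -> 1 <= m ->
  has (fun x : vertex => x.2 != c) L.
Proof.
case=> _ H hc hm.
have [|||x xL hx] := H (1, c.-1) (1, c.+1).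
+ rewrite /inV /=; lia.
+ rewrite /inV /=; lia.
+ case; lia.
apply/hasP; exists x => //; move: hx; rewrite /separates /gdist /adiff /=; lia.
Qed.

Lemma suff m n L : 2 <= m -> 2 <= n -> all (inV m n) L -> covers m n L ->
  rowcond m L -> colcond n L -> landmark m n L.
Proof.
move=> hm hn hall hcov hrow hcol; split=> // u v hu hv huv.
case: (boolP (has (fun x => separates x u v) L)) => [/hasP[x xL hx]|]; first by exists x.
move/hasPn=> H; exfalso.
have Heq : forall x, x \in L -> gdist x u = gdist x v.
  by move=> x /H; rewrite /separates negbK => /eqP.
have [x0 x0L _] : exists2 x0, x0 \in L & true.
  have/hasP[x ? _] : mainC L 1 1 by apply: (covM hcov); lia.
  by exists x.
clear H.
wlog le_uv : u v hu hv huv Heq / u.1 <= v.1.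
  move=> W; case: (leqP u.1 v.1) => h; first by apply: (W u v).
  apply: (W v u) => //; [by move=> e; apply: huv | by move=> x /Heq -> | lia].
case: u hu huv Heq le_uv => a b; case: v hv => a2 b2.
rewrite /inV /= => /andP[/andP[ha2 ha2'] /andP[hb2 hb2']] /andP[/andP[ha ha'] /andP[hb hb']] huv Heq hle.
have G : forall x : vertex, x \in L -> forall P : bool, (P -> adiff x.1 a + adiff x.2 b = adiff x.1 a2 + adiff x.2 b2 -> False) -> P -> False.
  by move=> x xL P HP hP; apply: HP hP (Heq x xL).
case: (ltngtP a a2) hle => // hA _; last first.
  subst a2.
  have hbb : b != b2 by apply/eqP=> e; apply: huv; rewrite e.
  set h := (b + b2) %/ 2.
  case: (boolP (1 < h < n)) => hh.
    have/hasP[x xL hx] := hcol h hh.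
    apply: (G x xL _ _ hx); rewrite /adiff; lia.
  apply: (G x0 x0L true _ isT); rewrite /adiff; lia.
case: (ltngtP b b2) => hB.
- case: (leqP (a2 - a) (b2 - b)) => hpq.
  + set h := (b + b2 + (a2 - a)) %/ 2.
    have/hasP[x xL hx] : mainC L a h.-1 by apply: (covM hcov); lia.
    apply: (G x xL _ _ hx); rewrite /adiff; lia.
  + set h := (a + a2 + (b2 - b)) %/ 2.
    have/hasP[x xL hx] : mainC L h.-1 b by apply: (covM hcov); lia.
    apply: (G x xL _ _ hx); rewrite /adiff; lia.
- case: (leqP (a2 - a) (b - b2)) => hpq.
  + set h := (b + b2 - (a2 - a)) %/ 2.
    have/hasP[x xL hx] : antiC L a h by apply: (covA hcov); lia.
    apply: (G x xL _ _ hx); rewrite /adiff; lia.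
  + set h := (a + a2 - (b - b2)) %/ 2.
    have/hasP[x xL hx] : antiC L h b2 by apply: (covA hcov); lia.
    apply: (G x xL _ _ hx); rewrite /adiff; lia.
- subst b2.
  set h := (a + a2) %/ 2.
  case: (boolP (1 < h < m)) => hh.
    have/hasP[x xL hx] := hrow h hh.
    apply: (G x xL _ _ hx); rewrite /adiff; lia.
  apply: (G x0 x0L true _ isT); rewrite /adiff; lia.
Qed.

Section Chain.
Variables (m n k : nat) (q t : nat -> vertex).
Hypotheses (hz : zigzag m n k q) (hcr : corresponds m n k q t).

Lemma odd3 i : 2 <= i -> odd i -> 3 <= i.
Proof. by case: i => [|[|[|i]]]. Qed.

Lemma qstep i : 2 <= i <= 2 * k ->
  if odd i then (q i).1 = (q i.-1).1 /\ (q i.-1).2 < (q i).2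
  else (q i).2 = (q i.-1).2 /\ (q i.-1).1 < (q i).1.
Proof.
case: hz => _ _ _ He Ho hi; case: ifP => hodd.
  have h3 : 3 <= i by apply: odd3 => //; lia.
  by apply: Ho => //; lia.
apply: He; [lia | by rewrite hodd].
Qed.

Lemma tq i : 1 <= i <= 2 * k ->
  if odd i then (t i).2 = (q i).2 /\ (t i).1 <= (q i).1
  else (t i).1 = (q i).1 /\ (t i).2 <= (q i).2.
Proof.
case: hcr => _ h1 He Ho _ hi; case: ifP => hodd.
  case: (ltnP 1 i) => h.
    have h3 : 3 <= i by apply: odd3 => //; lia.
  by apply: Ho => //; lia.
  have -> : i = 1 by lia.
  by rewrite h1.
apply: He; [lia | by rewrite hodd].
Qed.

Lemma qmono i j : 1 <= i <= j -> j <= 2 * k -> (q i).1 <= (q j).1 /\ (q i).2 <= (q j).2.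
Proof.
elim: j => [|j IH] hij hj; first lia.
case: (eqVneq i j.+1) => [->|hne]; first lia.
have [h1 h2] := IH (ltac:(lia)) (ltac:(lia)).
have := @qstep j.+1 (ltac:(lia)).
case: ifP => _ /=; lia.
Qed.

Lemma t_in i : 1 <= i <= 2 * k -> t i \in tseq k t.
Proof. by move=> hi; apply: map_f; rewrite mem_iota; lia. Qed.

Lemma k2 : 2 <= k.
Proof. by case: hz. Qed.

Lemma tseq_uniq : uniq (tseq k t).
Proof.
rewrite /tseq map_inj_in_uniq ?iota_uniq // => i j hi hj; move: hi hj; rewrite !mem_iota => hi hj.
wlog lt_ij : i j hi hj / i <= j.
  move=> W e; case: (leqP i j) => h; first by apply: (W i j).
  by apply/esym; apply: (W j i) => //; lia.
move=> e; case: (eqVneq i j) => // hne; exfalso.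
have tqi := @tq i (ltac:(lia)); have tqj := @tq j (ltac:(lia)).
have [m1 m2] := @qmono i j.-1 (ltac:(lia)) (ltac:(lia)).
have qs := @qstep j (ltac:(lia)).
move: tqi tqj qs; rewrite e.
case: (odd i); case: (odd j) => /=; lia.
Qed.


Lemma t1row : (t 1).1 = 1.
Proof. by case: hcr => _ -> _ _ _; case: hz => _ _ []. Qed.

Lemma t2krow : (t (2 * k)).1 = m.
Proof.
have hk := k2.
have := @tq (2 * k) (ltac:(lia)).
rewrite oddM /= => -[-> _]; by case: hz => _ _ [].
Qed.

Lemma t2kcol : (t 1).2 < (t (2 * k)).2.
Proof. by case: hcr. Qed.

Lemma chain_main ci cj : 0 < ci < m -> 0 < cj < n -> mainC (tseq k t) ci cj.
Proof.
move=> hi hj; have hk := k2.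
have h1 := t1row; have h2 := t2krow; have h3 := t2kcol.
case: (leqP (t 1).2 cj) => h.
  by apply/hasP; exists (t 1); [apply: t_in; lia | lia].
by apply/hasP; exists (t (2 * k)); [apply: t_in; lia | lia].
Qed.

Lemma chain_anti ci cj : 0 < ci < m -> 0 < cj < n -> antiC (tseq k t) ci cj.
Proof.
move=> hci hcj; have hk := k2.
have h1 := t1row.
have tq1 := @tq 1 (ltac:(lia)); simpl in tq1.
case: (ltnP cj (t 1).2) => hlt.
  by apply/hasP; exists (t 1); [apply: t_in; lia | lia].
suff: forall d i, 2 * k - i <= d -> odd i -> 1 <= i < 2 * k -> (q i).2 <= cj ->
    antiC (tseq k t) ci cj.
  by move=> /(_ (2 * k) 1); apply => //; lia.
elim=> [|d IH] i hd hodd hi hqi; first lia.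
have qs1 := @qstep i.+1 (ltac:(lia)); rewrite /= hodd /= in qs1.
have tq1' := @tq i.+1 (ltac:(lia)); rewrite /= hodd /= in tq1'.
case: (eqVneq i.+1 (2 * k)) => he.
  have hm : (q (2 * k)).1 = m by case: hz => _ _ [].
  rewrite -he in hm.
  by apply/hasP; exists (t i.+1); [apply: t_in; lia | lia].
have qs2 := @qstep i.+2 (ltac:(lia)); rewrite /= hodd /= in qs2.
have tq2 := @tq i.+2 (ltac:(lia)); rewrite /= hodd /= in tq2.
case: (leqP (q i.+2).2 cj) => hq2.
  apply: (IH i.+2) => //; [lia | by rewrite /= hodd | lia].
case: (leqP (t i.+2).1 ci) => ht.
  by apply/hasP; exists (t i.+2); [apply: t_in; lia | lia].
by apply/hasP; exists (t i.+1); [apply: t_in; lia | lia].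
Qed.

Lemma part1 : 2 <= m -> 2 <= n -> landmark m n (tseq k t).
Proof.
move=> hm hn; have hk := k2.
have h1 := t1row; have h2 := t2krow; have h3 := t2kcol.
apply: suff => //.
- apply/allP=> x /mapP[i]; rewrite mem_iota => hi ->; case: hcr => H _ _ _ _; apply: H; lia.
- by move=> i j hi hj; split; [apply: chain_main | apply: chain_anti].
- by move=> r hr; apply/hasP; exists (t 1); [apply: t_in; lia | lia].
- move=> c hc; case: (eqVneq (t 1).2 c) => e.
    by apply/hasP; exists (t (2 * k)); [apply: t_in; lia | lia].
  by apply/hasP; exists (t 1); [apply: t_in; lia | lia].
Qed.
End Chain.

Lemma max_attained (T : eqType) (P : pred T) (F : T -> nat) (s : seq T) :
  has P s -> exists2 x, x \in s & P x && (F x == \max_(y <- s | P y) F y).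
Proof.
elim: s => //= y s IH; rewrite big_cons.
case: (boolP (P y)) => Py /=.
  case: (boolP (has P s)) => hs _.
    have [x xs /andP[Px /eqP Fx]] := IH hs.
    case: (leqP (F y) (\max_(y <- s | P y) F y)) => h.
      by exists x; [rewrite inE xs orbT | rewrite Px Fx eqxx].
    by exists y; [rewrite inE eqxx | rewrite Py eqxx].
  by exists y; [rewrite inE eqxx | rewrite Py big_hasC // maxn0 eqxx].
move=> hs; have [x xs hx] := IH hs.
by exists x => //; rewrite inE xs orbT.
Qed.

Definition maxrow (L : seq vertex) C := \max_(x <- L | x.2 <= C) x.1.
Definition maxcol (L : seq vertex) R := \max_(x <- L | x.1 <= R) x.2.

Lemma half_cases i : 0 < i -> (exists j, i = j.*2.+1) \/ (exists j, i = j.*2.+2).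
Proof.
move=> hi; have := odd_double_half i; case: (odd i) => /= e.
  by left; exists i./2; move: e; rewrite -!mul2n; lia.
by right; exists (i./2).-1; move: e; rewrite -!mul2n; lia.
Qed.

Lemma odd_dbl1 j : odd j.*2.+1. Proof. by rewrite /= odd_double. Qed.
Lemma odd_dbl2 j : odd j.*2.+2 = false. Proof. by rewrite /= odd_double. Qed.
Lemma half_dbl1 j : (j.*2.+1)./2 = j. Proof. by rewrite -addn1 halfD odd_double half_double /= addn0. Qed.
Lemma half_dbl2 j : (j.*2.+2)./2 = j.+1. Proof. by rewrite -addn2 halfD odd_double half_double /= addn1. Qed.

Section Greedy.
Variables (m n : nat) (L : seq vertex) (x0 : vertex).
Hypotheses (hm : 2 <= m) (hall : all (inV m n) L)
  (hanti : forall i j, 0 < i < m -> 0 < j < n -> antiC L i j)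
  (hx0 : x0 \in L) (hx01 : x0.1 = 1)
  (hzm : has (fun z : vertex => z.1 == m) L)
  (hB : forall z : vertex, z \in L -> z.1 = m -> x0.2 < z.2)
  (hy : has (fun y : vertex => (y.2 <= x0.2) && (1 < y.1)) L).

Lemma inL (x : vertex) : x \in L -> 1 <= x.1 <= m /\ 1 <= x.2 <= n.
Proof. by move/(allP hall); rewrite /inV => /andP[-> ->]. Qed.

Lemma le_maxrow (x : vertex) C : x \in L -> x.2 <= C -> x.1 <= maxrow L C.
Proof. by move=> xL hx; apply: (leq_bigmax_seq x). Qed.
Lemma le_maxcol (x : vertex) R : x \in L -> x.1 <= R -> x.2 <= maxcol L R.
Proof. by move=> xL hx; apply: (leq_bigmax_seq x). Qed.
Lemma maxrow_le C : maxrow L C <= m.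
Proof. by apply/bigmax_leqP_seq => x /inL [/andP[_ h] _] _. Qed.
Lemma maxcol_le R : maxcol L R <= n.
Proof. by apply/bigmax_leqP_seq => x /inL [_ /andP[_ h]] _. Qed.

Definition argrow C := nth x0 L (find (fun x : vertex => (x.2 <= C) && (x.1 == maxrow L C)) L).
Definition argcol R := nth x0 L (find (fun x : vertex => (x.1 <= R) && (x.2 == maxcol L R)) L).

Lemma argrowP C : x0.2 <= C ->
  [/\ argrow C \in L, (argrow C).2 <= C & (argrow C).1 = maxrow L C].
Proof.
move=> hC.
have hh : has (fun x : vertex => (x.2 <= C) && (x.1 == maxrow L C)) L.
  have [x xL hx] := @max_attained _ (fun x : vertex => x.2 <= C) (fun x => x.1) L
    (introT hasP (ex_intro2 _ _ x0 hx0 hC)).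
  by apply/hasP; exists x.
have := nth_find x0 hh; rewrite -/(argrow C) => /andP[h1 /eqP h2]; split=> //.
by rewrite /argrow mem_nth // -has_find.
Qed.

Lemma argcolP R : 1 <= R ->
  [/\ argcol R \in L, (argcol R).1 <= R & (argcol R).2 = maxcol L R].
Proof.
move=> hR; have h0 : x0.1 <= R by rewrite hx01.
have hh : has (fun x : vertex => (x.1 <= R) && (x.2 == maxcol L R)) L.
  have [x xL hx] := @max_attained _ (fun x : vertex => x.1 <= R) (fun x => x.2) L
    (introT hasP (ex_intro2 _ _ x0 hx0 h0)).
  by apply/hasP; exists x.
have := nth_find x0 hh; rewrite -/(argcol R) => /andP[h1 /eqP h2]; split=> //.
by rewrite /argcol mem_nth // -has_find.
Qed.

Fixpoint Cs j := if j is j'.+1 then maxcol L (maxrow L (Cs j')) else x0.2.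
Local Notation Rs j := (maxrow L (Cs j)).

Lemma Cs_ge j : x0.2 <= Cs j.
Proof.
elim: j => [|j IH] //=; apply: le_maxcol => //; rewrite hx01.
have := le_maxrow hx0 IH; rewrite hx01; lia.
Qed.

Lemma Rs_ge j : 1 <= Rs j.
Proof. by have := le_maxrow hx0 (Cs_ge j); rewrite hx01. Qed.

Lemma Cs_le j : Cs j <= n.
Proof. by case: j => [|j] /=; [have := inL hx0; lia | apply: maxcol_le]. Qed.

Lemma x0col : 1 <= x0.2. Proof. by have := inL hx0; lia. Qed.

Lemma zexists : exists2 z : vertex, z \in L & z.1 = m.
Proof. by have/hasP[z zL /eqP hz] := hzm; exists z. Qed.

Lemma step j : Rs j < m -> Cs j < Cs j.+1 /\ Rs j < Rs j.+1.
Proof.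
move=> hR; have [z zL zm] := zexists.
have hz := inL zL.
have hCn : Cs j < n.
  case: (ltnP (Cs j) n) => // hh.
  have := @le_maxrow z (Cs j) zL (ltac:(lia)); lia.
have hc1 := Cs_ge j; have hx := x0col; have hr1 := Rs_ge j.
have/hasP[x xL hx'] := @hanti (Rs j) (Cs j) (ltac:(lia)) (ltac:(lia)).
have hlt : Cs j < Cs j.+1.
  case/orP: hx' => /andP[h1 h2].
    by have := le_maxcol xL h1; rewrite /=; lia.
  by have := le_maxrow xL h2; lia.
split=> //.
have hCn' := Cs_le j.+1.
case: (eqVneq (Cs j.+1) n) => hn'.
  have := @le_maxrow z (Cs j.+1) zL (ltac:(lia)); lia.
have/hasP[y yL hy'] := @hanti (Rs j) (Cs j.+1) (ltac:(lia)) (ltac:(lia)).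
case/orP: hy' => /andP[h1 h2].
  by have := le_maxcol yL h1; rewrite /= in h2 *; lia.
by have := le_maxrow yL h2; lia.
Qed.

Lemma R0 : 1 < Rs 0 < m.
Proof.
apply/andP; split.
  have/hasP[y yL /andP[h1 h2]] := hy.
  by have := le_maxrow yL h1; rewrite /=; lia.
have : Rs 0 <= m.-1.
  apply/bigmax_leqP_seq; case=> a b xL hx /=; rewrite /= in hx.
  have := inL xL; rewrite /=; case: (eqVneq a m) => e; last lia.
  by have := hB xL e; rewrite /=; lia.
lia.
Qed.

Lemma reach : exists j, Rs j == m.
Proof.
suff: forall j, (exists2 j', j' <= j & Rs j' = m) \/ j.+2 <= Rs j.
  case/(_ m) => [[j' _ e]|h]; first by exists j'; rewrite e.
  by have := maxrow_le (Cs m); lia.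
elim=> [|j [[j' hj' e]|IH]].
- by right; have := R0; lia.
- by left; exists j' => //; lia.
- case: (ltnP (Rs j) m) => h.
    by right; have := step h; lia.
  by left; exists j => //; have := maxrow_le (Cs j); lia.
Qed.

Definition K := ex_minn reach.
Lemma RK : Rs K = m.
Proof. by rewrite /K; case: ex_minnP => j /eqP. Qed.
Lemma RltK j : j < K -> Rs j < m.
Proof.
rewrite /K; case: ex_minnP => K0 _ hmin hj.
have := maxrow_le (Cs j); case: (ltngtP (Rs j) m) => // e _.
by have := hmin j (introT eqP e); lia.
Qed.
Lemma K1 : 1 <= K.
Proof. case: (posnP K) => // e; have := RK; rewrite e; have := R0; lia. Qed.

Definition qg i : vertex :=
  if odd i then ((if i./2 is j.+1 then Rs j else 1), Cs i./2)
  else (Rs (i./2).-1, Cs (i./2).-1).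
Definition tg i : vertex :=
  if odd i then (if i./2 is j.+1 then argcol (Rs j) else x0)
  else argrow (Cs (i./2).-1).

Lemma qg1 j : qg j.*2.+1 = ((if j is j'.+1 then Rs j' else 1), Cs j).
Proof. by rewrite /qg odd_dbl1 half_dbl1. Qed.
Lemma qg2 j : qg j.*2.+2 = (Rs j, Cs j).
Proof. by rewrite /qg odd_dbl2 half_dbl2. Qed.
Lemma tg1 j : tg j.*2.+1 = (if j is j'.+1 then argcol (Rs j') else x0).
Proof. by rewrite /tg odd_dbl1 half_dbl1. Qed.
Lemma tg2 j : tg j.*2.+2 = argrow (Cs j).
Proof. by rewrite /tg odd_dbl2 half_dbl2. Qed.

Lemma greedy : exists k, [/\ zigzag m n k qg, corresponds m n k qg tg &
  {subset tseq k tg <= L}].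
Proof.
have hK1 := K1; have hRK := RK; have hx := x0col.
have tgL : forall i, 0 < i -> tg i \in L.
  move=> i /half_cases [[j ->]|[j ->]].
    by rewrite tg1; case: j => [|j] //; case: (argcolP (Rs_ge j)).
  by rewrite tg2; case: (argrowP (Cs_ge j)).
have e2k : 2 * K.+1 = K.*2.+2 by rewrite mul2n doubleS.
exists K.+1; split.
- split; first lia.
  + move=> i hi; have [[j ei]|[j ei]] := @half_cases i (ltac:(lia)); subst i.
      rewrite qg1 /inV /=; have := Cs_ge j; have := Cs_le j.
      case: j hi => [|j] hi; first lia.
      by have := Rs_ge j; have := maxrow_le (Cs j); lia.
    rewrite qg2 /inV /=; have := Cs_ge j; have := Cs_le j.
    by have := Rs_ge j; have := maxrow_le (Cs j); lia.
  + by rewrite e2k qg2 (_ : 1 = 0.*2.+1) // qg1.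
  + move=> i hi; have [[j ei]|[j ei]] := @half_cases i (ltac:(lia)); subst i.
      by rewrite odd_dbl1.
    move=> _; rewrite /= qg2 qg1 /=; split=> //.
    case: j hi => [|j] hi; first by have := R0; lia.
    by have := step (@RltK j (ltac:(lia))); lia.
  + move=> i hi; have [[j ei]|[j ei]] := @half_cases i (ltac:(lia)); subst i; last first.
      by rewrite odd_dbl2.
    move=> _; case: j hi => [|j] hi; first lia.
    rewrite (_ : (j.+1.*2.+1).-1 = j.*2.+2); last by rewrite doubleS.
    rewrite qg1 qg2 /=; split=> //.
    by have := step (@RltK j (ltac:(lia))); rewrite /=; lia.
- split.
  + move=> i hi; apply: (allP hall); apply: tgL; lia.
  + by rewrite /tg /qg /=; move: hx01; case: x0 => a b /= ->.
  + move=> i hi; have [[j ei]|[j ei]] := @half_cases i (ltac:(lia)); subst i.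
      by rewrite odd_dbl1.
    move=> _; rewrite tg2 qg2 /=; case: (argrowP (Cs_ge j)) => _ h1 h2; lia.
  + move=> i hi; have [[j ei]|[j ei]] := @half_cases i (ltac:(lia)); subst i; last first.
      by rewrite odd_dbl2.
    move=> _; case: j hi => [|j] hi; first lia.
    rewrite tg1 qg1 /=; case: (argcolP (Rs_ge j)) => _ h1 h2; lia.
  + rewrite e2k tg2 (_ : 1 = 0.*2.+1) // tg1.
    case: (argrowP (Cs_ge K)) => h0 h1 h2.
    by apply: hB => //; rewrite h2.
- by move=> w /mapP[i]; rewrite mem_iota => hi ->; apply: tgL; lia.
Qed.
End Greedy.

Section Transport.
Variables (m n m' n' : nat) (f g : vertex -> vertex).
Hypotheses (Hf : forall v, inV m n v -> inV m' n' (f v))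
  (Hg : forall w, inV m' n' w -> inV m n (g w))
  (Hgf : forall v, inV m n v -> g (f v) = v)
  (Hfg : forall w, inV m' n' w -> f (g w) = w)
  (Hiso : forall u v, inV m n u -> inV m n v -> gdist (f u) (f v) = gdist u v).

Lemma Hiso' u v : inV m' n' u -> inV m' n' v -> gdist (g u) (g v) = gdist u v.
Proof. by move=> hu hv; rewrite -Hiso ?Hfg //; apply: Hg. Qed.

Lemma landmark_map L : landmark m n L -> landmark m' n' (map f L).
Proof.
case=> hall H; split.
  by apply/allP => _ /mapP[x xL ->]; apply: Hf; apply: (allP hall).
move=> u v hu hv huv.
have [|||x xL hx] := H (g u) (g v); [exact: Hg | exact: Hg | |].
  by move=> e; apply: huv; rewrite -(Hfg hu) -(Hfg hv) e.
have hxin := allP hall x xL.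
exists (f x); first exact: map_f.
by rewrite /separates -(Hfg hu) -(Hfg hv) !Hiso //; apply: Hg.
Qed.

Lemma landmark_mapg L : landmark m' n' L -> landmark m n (map g L).
Proof.
case=> hall H; split.
  by apply/allP => _ /mapP[x xL ->]; apply: Hg; apply: (allP hall).
move=> u v hu hv huv.
have [|||x xL hx] := H (f u) (f v); [exact: Hf | exact: Hf | |].
  by move=> e; apply: huv; rewrite -(Hgf hu) -(Hgf hv) e.
have hxin := allP hall x xL.
exists (g x); first exact: map_f.
by rewrite /separates -(Hgf hu) -(Hgf hv) !Hiso' //; apply: Hf.
Qed.

Lemma minimal_map L : minimal_landmark m n L -> minimal_landmark m' n' (map f L).
Proof.
case=> hl hmin; split; first exact: landmark_map.
move=> L2 hsub hnot hl2.
have hall := hl.1.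
have in2 : forall w, w \in L2 -> exists2 x, x \in L & w = f x.
  by move=> w /hsub /mapP[x xL ->]; exists x.
have hsub' : {subset map g L2 <= L}.
  move=> _ /mapP[w /in2 [x xL ->] ->]; rewrite Hgf //; exact: (allP hall).
have hl' := landmark_mapg hl2.
case: (boolP (all (fun x => x \in map g L2) L)) => [/allP hA|/allPn[x xL hx]].
  apply: hnot => _ /mapP[x xL ->].
  have/mapP[w wL2 ->] := hA x xL.
  have [x' x'L ew] := in2 w wL2; subst w.
  by rewrite Hgf //; exact: (allP hall).
apply: (hmin _ hsub') => // hLS.
by move: hx; rewrite hLS.
Qed.

Lemma uniq_map L : all (inV m n) L -> uniq L -> uniq (map f L).
Proof.
move=> hall hu; rewrite map_inj_in_uniq // => x y xL yL e.
by rewrite -(Hgf (allP hall x xL)) e Hgf //; exact: (allP hall).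
Qed.
End Transport.

Lemma uniq_mapg m' n' (f g : vertex -> vertex) L :
  (forall w, inV m' n' w -> f (g w) = w) -> all (inV m' n') L -> uniq L -> uniq (map g L).
Proof.
move=> Hfg hall hu; rewrite map_inj_in_uniq // => x y xL yL e.
by rewrite -(Hfg _ (allP hall x xL)) e Hfg //; exact: (allP hall).
Qed.

Ltac symtac := rewrite /inV /symv /syminv /symdims /gdist /adiff /=.

Lemma symv_in m n s v : inV m n v -> inV (symdims m n s).1 (symdims m n s).2 (symv m n s v).
Proof. by case: s => [[[] []] []]; case: v => a b; symtac; lia. Qed.
Lemma syminv_in m n s w : inV (symdims m n s).1 (symdims m n s).2 w -> inV m n (syminv m n s w).
Proof. by case: s => [[[] []] []]; case: w => a b; symtac; lia. Qed.
Lemma syminv_symv m n s v : inV m n v -> syminv m n s (symv m n s v) = v.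
Proof. by case: s => [[[] []] []]; case: v => a b; symtac => h; congr (_, _); lia. Qed.
Lemma symv_syminv m n s w : inV (symdims m n s).1 (symdims m n s).2 w -> symv m n s (syminv m n s w) = w.
Proof. by case: s => [[[] []] []]; case: w => a b; symtac => h; congr (_, _); lia. Qed.
Lemma symv_iso m n s u v : inV m n u -> inV m n v -> gdist (symv m n s u) (symv m n s v) = gdist u v.
Proof. by case: s => [[[] []] []]; case: u => a b; case: v => c d; symtac; lia. Qed.

Lemma covers_sub m n (S S' : seq vertex) : covers m n S -> {subset S <= S'} -> covers m n S'.
Proof.
move=> H hs i j hi hj; have [h1 h2] := H i j hi hj; split.
  by have/hasP[x xS hx] := h1; apply/hasP; exists x => //; apply: hs.
by have/hasP[x xS hx] := h2; apply/hasP; exists x => //; apply: hs.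
Qed.
Lemma cov_col m n A : covers m n [:: (1, A); (m, A)].
Proof. by move=> i j hi hj; rewrite /mainC /antiC /=; split; lia. Qed.
Lemma cov_tri m n x y z : x <= z <= y -> covers m n [:: (1, x); (1, y); (m, z)].
Proof. by move=> h i j hi hj; rewrite /mainC /antiC /=; split; lia. Qed.
Lemma row1 m (a : nat) (S : seq vertex) : rowcond m ((1, a) :: S).
Proof. by move=> r hr; rewrite /=; apply/orP; left; lia. Qed.
Lemma col2 n (S : seq vertex) (u v : vertex) : u \in S -> v \in S -> u.2 != v.2 -> colcond n S.
Proof.
move=> uS vS huv c hc; case: (eqVneq u.2 c) => e.
  by apply/hasP; exists v => //; rewrite -e eq_sym.
by apply/hasP; exists u.
Qed.
Lemma colb n (a A : nat) (S : seq vertex) : ~~ (1 < A < n) -> colcond n ((a, A) :: S).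
Proof. by move=> hA c hc; apply/orP; left; rewrite /=; apply/eqP => e; subst; rewrite hc in hA. Qed.

Lemma small_contra m n (L S : seq vertex) : 2 <= m -> 2 <= n -> minimal_landmark m n L ->
  uniq L -> 4 <= size L -> {subset S <= L} -> size S <= 3 ->
  covers m n S -> rowcond m S -> colcond n S -> False.
Proof.
move=> hm hn [[hall hsep] hmin] hu hs hSL hS hcov hr hc.
have hl : landmark m n S.
  apply: suff => //; apply/allP => x /hSL; exact: (allP hall).
apply: (hmin S hSL) => // hLS.
by have := leq_trans hs (leq_trans (uniq_leq_size hu hLS) hS).
Qed.

Lemma minimal_sub m n (L T : seq vertex) : minimal_landmark m n L -> {subset T <= L} ->
  landmark m n T -> {subset L <= T}.
Proof.
case=> _ hmin hTL hT.
case: (boolP (all (fun x => x \in T) L)) => [/allP //|/allPn[x xL hx]].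
by exfalso; apply: (hmin T hTL) => // hLT; move: hx; rewrite hLT.
Qed.

Lemma canon m n (L : seq vertex) : 2 <= m -> 2 <= n -> minimal_landmark m n L -> uniq L ->
  4 <= size L -> has (fun z : vertex => z.1 == m) L ->
  (exists2 x : vertex, x \in L & x.1 = 1 /\ forall z : vertex, z \in L -> z.1 = m -> x.2 < z.2) ->
  exists k q t, [/\ zigzag m n k q, corresponds m n k q t & perm_eq (tseq k t) L].
Proof.
move=> hm hn hmin hu hs hzm [xa xaL [xa1 xaB]].
have hl := hmin.1; have hall := hl.1; have hcov := landmark_covers hl.
have inL : forall a b, (a, b) \in L -> 1 <= a <= m /\ 1 <= b <= n.
  by move=> a b /(allP hall); rewrite /inV => /andP[-> ->].
pose S1 := fun x : vertex => (x.1 == 1) && all (fun z : vertex => (z.1 == m) ==> (x.2 < z.2)) L.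
have hS1 : has S1 L.
  apply/hasP; exists xa => //; rewrite /S1 xa1 eqxx /=.
  by apply/allP => z zL; apply/implyP => /eqP e; apply: xaB.
have [[a1 b1] xsL /andP[hxs /eqP exs]] := max_attained (fun x : vertex => x.2) hS1.
set d := \max_(y <- L | S1 y) y.2 in exs.
move: hxs; rewrite /S1 /= => /andP[/eqP xs1 /allP xsB]; subst a1.
have xsB' : forall a b, (a, b) \in L -> a = m -> b1 < b.
  by move=> a b zL e; have := xsB _ zL; rewrite /= e eqxx.
case: (boolP (has (fun y : vertex => (y.2 <= b1) && (1 < y.1)) L)) => hy.
  have hB : forall z : vertex, z \in L -> z.1 = m -> (1, b1).2 < z.2.
    by case=> a b zL /= e; apply: xsB' zL e.
  have [k [hz hcr hsub]] := greedy hm hall (fun i j hi hj => (hcov i j hi hj).2) xsL erefl hzm hB hy.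
  have hT := part1 hz hcr hm hn.
  have hLT := minimal_sub hmin hsub hT.
  exists k, (qg L (1, b1)), (tg L (1, b1)); split => //.
  apply: uniq_perm => //; first exact: tseq_uniq hz hcr.
  by move=> x; apply/idP/idP => [/hsub|/hLT].
exfalso.
have [[a0 b0] z0L /eqP /= z0m] := hasP hzm; subst a0.
have hxs := inL _ _ xsL; have hz0 := inL _ _ z0L; have hz0c := xsB' _ _ z0L erefl.
have/hasP[[a2 b2] xL hx] : antiC L 1 b1 by apply: (covA hcov); clear - hxs hz0 hz0c hm hn; lia.
have hxx := inL _ _ xL.
move/hasPn: hy => /(_ _ xL) hy; rewrite /= in hx hy.
have x1 : a2 = 1 by clear - hx hy hxx; lia.
have dx : b1 < b2 by clear - hx hy hxx; lia.
subst a2.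
have nS1 : ~~ S1 (1, b2).
  apply/negP => hS; have := @leq_bigmax_seq _ L S1 (fun y : vertex => y.2) (1, b2) xL hS.
  rewrite -/d -exs /= => h; clear - h dx; lia.
move: nS1; rewrite /S1 /= => /allPn[[a3 b3] zL].
rewrite negb_imply /= => /andP[/eqP zm zx]; subst a3.
have hz := inL _ _ zL; have hzc := xsB' _ _ zL erefl.
apply: (@small_contra m n L [:: (1, b1); (1, b2); (m, b3)]) => //.
- by move=> w; rewrite !inE => /or3P[] /eqP ->.
- by apply: cov_tri; rewrite (ltnW hzc) /= leqNgt zx.
- exact: row1.
- by apply: (@col2 n _ (1, b1) (m, b3)); rewrite ?inE ?eqxx ?orbT //= (ltn_eqF hzc).
Qed.

Lemma occ_helper (L : seq vertex) (x : vertex) (P Q : pred vertex) :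
  x \in L -> P x || Q x -> has P L || has Q L.
Proof. by move=> xL /orP[h|h]; apply/orP; [left|right]; apply/hasP; exists x. Qed.

Lemma stageF m n (L : seq vertex) : 2 <= m -> 2 <= n -> minimal_landmark m n L -> uniq L ->
  4 <= size L -> has (fun x : vertex => x.1 == 1) L -> has (fun x : vertex => x.1 == m) L ->
  exists b : bool, exists k q t, [/\ zigzag m n k q, corresponds m n k q t &
    perm_eq (tseq k t) (map (symv m n (b, false, false)) L)].
Proof.
move=> hm hn hmin hu hs h1 hM.
have hl := hmin.1; have hall := hl.1; have hcov := landmark_covers hl.
have inL : forall a b, (a, b) \in L -> 1 <= a <= m /\ 1 <= b <= n.
  by move=> a b /(allP hall); rewrite /inV => /andP[-> ->].
case: (boolP (has (fun x : vertex => (x.1 == 1) &&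
    all (fun z : vertex => (z.1 == m) ==> (x.2 < z.2)) L) L)) => hA.
  have/hasP[[a b] xL /andP[/eqP /= e /allP hB]] := hA.
  have [k [q [t [hz hcr hp]]]] := canon hm hn hmin hu hs hM
    (ex_intro2 _ _ (a, b) xL (conj e (fun z zL ez => (implyP (hB z zL)) (introT eqP ez)))).
  exists false, k, q, t; split => //.
  by rewrite (@eq_map _ _ _ id) ?map_id // => -[].
case: (boolP (has (fun z : vertex => (z.1 == m) &&
    all (fun x : vertex => (x.1 == 1) ==> (z.2 < x.2)) L) L)) => hBt.
  set s := (true, false, false).
  have Hf := @symv_in m n s; have Hg := @syminv_in m n s.
  have Hgf := @syminv_symv m n s; have Hfg := @symv_syminv m n s.
  have Hiso := @symv_iso m n s.
  have hmin2 := minimal_map Hf Hg Hgf Hfg Hiso hmin.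
  have hu2 := uniq_map Hgf hall hu.
  have hs2 : 4 <= size (map (symv m n s) L) by rewrite size_map.
  have hM2 : has (fun x : vertex => x.1 == m) (map (symv m n s) L).
    have/hasP[[a b] xL /eqP /= e] := h1; subst a.
    by apply/hasP; exists (symv m n s (1, b)); [apply: map_f | rewrite /= subSS subn0].
  have/hasP[[a b] zL /andP[/eqP /= e /allP hB]] := hBt; subst a.
  have ha2 : exists2 x : vertex, x \in map (symv m n s) L & x.1 = 1 /\
      forall z : vertex, z \in map (symv m n s) L -> z.1 = m -> x.2 < z.2.
    exists (symv m n s (m, b)); first exact: map_f.
    split; first by rewrite /= subSnn.
    move=> _ /mapP[[c d] xL ->] /= ec.
    have := inL _ _ xL => hx.
    have ec1 : c = 1 by clear - hx ec; lia.
    by have := hB _ xL; rewrite /= ec1 eqxx.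
  have [k [q [t [hz hcr hp]]]] := canon hm hn hmin2 hu2 hs2 hM2 ha2.
  by exists true, k, q, t.
exfalso.
have ex1 : exists c, has (fun x : vertex => (x.1 == 1) && (x.2 == c)) L.
  by have/hasP[[a b] xL /eqP /= e] := h1; exists b; apply/hasP; exists (a, b); rewrite //= e !eqxx.
case: (ex_minnP ex1) => A /hasP[[a b] aL /andP[/eqP /= ea /eqP /= eb]] hminA.
subst a b.
have hminA' : forall b, (1, b) \in L -> A <= b.
  by move=> b bL; apply: hminA; apply/hasP; exists (1, b); rewrite //= !eqxx.
move/hasPn: hA => /(_ _ aL) /=; rewrite ?eqxx /= => /allPn[[c d] zL].
rewrite negb_imply /= => /andP[/eqP ec hd]; subst c.
move/hasPn: hBt => /(_ _ zL) /=; rewrite ?eqxx /= => /allPn[[c e] xL].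
rewrite negb_imply /= => /andP[/eqP ec he]; subst c.
have := hminA' _ xL => hAe.
have dA : d = A by clear - hd he hAe; lia.
subst d.
have hS1 : has (fun x : vertex => x.1 == 1) L by [].
have [[a' A'] maL /andP[/eqP /= ea' /eqP /= eA']] := max_attained (fun x : vertex => x.2) hS1.
subst a'.
have hAA' : A <= A'.
  by rewrite eA'; apply: (@leq_bigmax_seq _ L (fun x : vertex => x.1 == 1) (fun x : vertex => x.2) (1, A) aL).
have hAi := inL _ _ aL; have hAi' := inL _ _ maL; have hmi := inL _ _ zL.
case: (ltnP A A') => hlt.
  apply: (@small_contra m n L [:: (1, A); (1, A'); (m, A)]) => //.
  - by move=> w; rewrite !inE => /or3P[] /eqP ->.
  - by apply: cov_tri; rewrite leqnn ltnW.
  - exact: row1.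
  - by apply: (@col2 n _ (1, A) (1, A')); rewrite ?inE ?eqxx ?orbT //= (ltn_eqF hlt).
case: (boolP (has (fun y : vertex => y.2 != A) L)) => hy.
  have/hasP[[c e2] yL /= hye] := hy.
  apply: (@small_contra m n L [:: (1, A); (m, A); (c, e2)]) => //.
  - by move=> w; rewrite !inE => /or3P[] /eqP ->.
  - apply: (@covers_sub m n [:: (1, A); (m, A)]); first exact: cov_col.
    by move=> w; rewrite !inE => /orP[] ->; rewrite ?orbT.
  - exact: row1.
  - by apply: (@col2 n _ (1, A) (c, e2)); rewrite ?inE ?eqxx ?orbT //= eq_sym.
case: (boolP (1 < A < n)) => hAn.
  by have := landmark_col hl hAn (ltnW hm); rewrite (negbTE hy).
apply: (@small_contra m n L [:: (1, A); (m, A)]) => //.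
- by move=> w; rewrite !inE => /orP[] /eqP ->.
- exact: cov_col.
- exact: row1.
- exact: colb.
Qed.

Lemma structure m n (L : seq vertex) : 2 <= m -> 2 <= n -> minimal_landmark m n L -> uniq L ->
  4 <= size L -> exists s, exists k q t,
    [/\ zigzag (symdims m n s).1 (symdims m n s).2 k q,
        corresponds (symdims m n s).1 (symdims m n s).2 k q t &
        perm_eq (tseq k t) (map (symv m n s) L)].
Proof.
move=> hm hn hmin hu hs.
have hl := hmin.1; have hall := hl.1; have hcov := landmark_covers hl.
have inL : forall a b, (a, b) \in L -> 1 <= a <= m /\ 1 <= b <= n.
  by move=> a b /(allP hall); rewrite /inV => /andP[-> ->].
pose r1 := has (fun x : vertex => x.1 == 1) L.
pose rm := has (fun x : vertex => x.1 == m) L.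
pose c1 := has (fun x : vertex => x.2 == 1) L.
pose cn := has (fun x : vertex => x.2 == n) L.
have f1 : r1 || c1.
  have/hasP[[a b] xL hx] : antiC L 1 1 by apply: (covA hcov); clear - hm hn; lia.
  by apply: (occ_helper xL); have := inL _ _ xL; rewrite /= in hx *; clear - hx hm hn; lia.
have f2 : r1 || cn.
  have/hasP[[a b] xL hx] : mainC L 1 n.-1 by apply: (covM hcov); clear - hm hn; lia.
  by apply: (occ_helper xL); have := inL _ _ xL; rewrite /= in hx *; clear - hx hm hn; lia.
have f3 : rm || c1.
  have/hasP[[a b] xL hx] : mainC L m.-1 1 by apply: (covM hcov); clear - hm hn; lia.
  by apply: (occ_helper xL); have := inL _ _ xL; rewrite /= in hx *; clear - hx hm hn; lia.
have f4 : rm || cn.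
  have/hasP[[a b] xL hx] : antiC L m.-1 n.-1 by apply: (covA hcov); clear - hm hn; lia.
  by apply: (occ_helper xL); have := inL _ _ xL; rewrite /= in hx *; clear - hx hm hn; lia.
case: (boolP (r1 && rm)) => hr.
  case/andP: hr => hr1 hrm.
  have [b [k [q [t [hz hcr hp]]]]] := stageF hm hn hmin hu hs hr1 hrm.
  by exists (b, false, false), k, q, t.
have hc : c1 && cn by move: f1 f2 f3 f4 hr; case: r1; case: rm; case: c1; case: cn.
case/andP: hc => hc1 hcn.
set s := (false, false, true).
have Hf := @symv_in m n s; have Hg := @syminv_in m n s.
have Hgf := @syminv_symv m n s; have Hfg := @symv_syminv m n s.
have Hiso := @symv_iso m n s.
have hmin2 := minimal_map Hf Hg Hgf Hfg Hiso hmin.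
have hu2 := uniq_map Hgf hall hu.
have hs2 : 4 <= size (map (symv m n s) L) by rewrite size_map.
have h1 : has (fun x : vertex => x.1 == 1) (map (symv m n s) L).
  have/hasP[[a b] xL /eqP /= e] := hc1; subst b.
  by apply/hasP; exists (symv m n s (a, 1)); [apply: map_f | rewrite /=].
have hM : has (fun x : vertex => x.1 == n) (map (symv m n s) L).
  have/hasP[[a b] xL /eqP /= e] := hcn; subst b.
  by apply/hasP; exists (symv m n s (a, n)); [apply: map_f | rewrite /=].
have [b [k [q [t [hz hcr hp]]]]] := stageF hn hm hmin2 hu2 hs2 h1 hM.
exists (false, b, true), k, q, t; split => //.
rewrite -map_comp in hp; apply: (perm_trans hp).
by rewrite (@eq_map _ _ _ (symv m n (false, b, true))) // => -[x y]; case: b.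
Qed.

Lemma landmark_eq m n (L1 L2 : seq vertex) : L1 =i L2 -> landmark m n L1 -> landmark m n L2.
Proof.
move=> e [hall H]; split.
  by apply/allP => x; rewrite -e; apply: (allP hall).
move=> u v hu hv huv; have [x xL hx] := H u v hu hv huv.
by exists x; rewrite // -e.
Qed.

Lemma minimal_undup m n (L : seq vertex) : minimal_landmark m n L -> minimal_landmark m n (undup L).
Proof.
case=> hl hmin; split; first by apply: landmark_eq hl => x; rewrite mem_undup.
move=> L' hsub hnot; apply: hmin.
  by move=> x /hsub; rewrite mem_undup.
by move=> h; apply: hnot => x; rewrite mem_undup => /h.
Qed.

Lemma seqcostE c k (t : nat -> vertex) : seqcost c k t = (\sum_(w <- tseq k t) c w)%R.
Proof. by rewrite /seqcost /tseq big_map /index_iota subSS subn0. Qed.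

Lemma symdims_ge m n s : 2 <= m -> 2 <= n -> 2 <= (symdims m n s).1 /\ 2 <= (symdims m n s).2.
Proof. by case: s => [[[] []] []]. Qed.

Theorem mainTheorem1 (m n : nat) (c : vertex -> rat)
  (hm : 2 <= m) (hn : 2 <= n)
  (hc : forall v, inV m n v -> (0 <= c v)%R) :
  (forall (k : nat) (q t : nat -> vertex),
     zigzag m n k q -> corresponds m n k q t -> landmark m n (tseq k t)) /\
  (forall L : seq vertex,
     minimal_landmark m n L -> min_cost_landmark m n c L -> 4 <= size (undup L) ->
     exists s : bool * bool * bool,
       let m' := (symdims m n s).1 in
       let n' := (symdims m n s).2 in
       let c' := fun w => c (syminv m n s w) in
       exists (k : nat) (q t : nat -> vertex),
         [/\ zigzag m' n' k q, perfect m' n' c' k q t &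
             perm_eq (tseq k t) (map (symv m n s) (undup L))]).
Proof.
split.
  by move=> k q t hz hcr; apply: part1 hz hcr hm hn.
move=> L hmin [_ hmc] hs.
have hmin0 := minimal_undup hmin.
have hu := undup_uniq L.
have [s [k [q [t [hz hcr hp]]]]] := structure hm hn hmin0 hu hs.
exists s; exists k, q, t; split => //; split => // t' hcr'.
have Hf := @symv_in m n s; have Hg := @syminv_in m n s.
have Hgf := @syminv_symv m n s; have Hfg := @symv_syminv m n s.
have Hiso := @symv_iso m n s.
have [hm' hn'] := symdims_ge s hm hn.
have hall0 := hmin0.1.1.
rewrite !seqcostE (perm_big _ hp) big_map.
rewrite (@eq_big_seq _ _ _ _ _ _ c); last first.
  by move=> v vL /=; rewrite Hgf //; apply: (allP hall0).
have hT' := part1 hz hcr' hm' hn'.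
have hl2 := landmark_mapg Hf Hg Hgf Hfg Hiso hT'.
have hu2 : uniq (map (syminv m n s) (tseq k t')).
  apply: (@uniq_mapg (symdims m n s).1 (symdims m n s).2 (symv m n s) (syminv m n s) _ Hfg); last exact: tseq_uniq hz hcr'.
  apply/allP => w; rewrite /tseq => /mapP[i]; rewrite mem_iota => hi ->.
  by case: hcr' => H _ _ _ _; apply: H; lia.
have := hmc _ hl2.
by rewrite /setcost (undup_id hu2) big_map.
Qed.
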